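(* Let $A\in\mathbb{R}^{n\times n}$ and $B\in\mathbb{R}^{n\times m}$ define the discrete-time system $x^+=Ax+Bu$. Let $\mathrm{S}\in\mathbb{R}^{n_s\times n}$ be such that $\mathcal{S}:=\{x\in\mathbb{R}^n:\mathrm{S}x\le \mathbf{1}\}$ is a C-set, and let $\mathrm{U}\in\mathbb{R}^{n_u\times m}$ be such that $\mathcal{U}:=\{u\in\mathbb{R}^m:\mathrm{U}u\le\mathbf{1}\}$ (a polyhedral convex set containing the origin in its interior). Fix $\lambda\in[0,1)$. Let $u_d(0),\dots,u_d(T-1)\in\mathbb{R}^m$ be an input sequence and $x_d(0),\dots,x_d(T)\in\mathbb{R}^n$ the corresponding states with $x_d(k+1)=Ax_d(k)+Bu_d(k)$, and set $U_{0,T}:=[u_d(0)\ \cdots\ u_d(T-1)]$, $X_{0,T}:=[x_d(0)\ \cdots\ x_d(T-1)]$, $X_{1,T}:=[x_d(1)\ \cdots\ x_d(T)]$. Assume the matrix $\Theta:=\begin{bmatrix}U_{0,T}\\ X_{0,T}\end{bmatrix}$ has full row rank. Then there exists a matrix $K\in\mathbb{R}^{m\times n}$ such that $\mathcal{S}$ is $\lambda$-contractive for $x^+=(A+BK)x$ and admissible for $\mathcal{U}$ if and only if there exist matrices $G_K\in\mathbb{R}^{T\times n}$ and $P\in\mathbb{R}^{n_s\times n_s}$ with $P\ge0$ such that $P\mathbf{1}\le\lambda\mathbf{1}$, $\;P\mathrm{S}=\mathrm{S}X_{1,T}G_K$, $\;\mathrm{U}U_{0,T}G_K s\le\mathbf{1}$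 for all vertices $s$ of $\mathcal{S}$, and $I_n=X_{0,T}G_K$. Moreover, any such controller $K$ can be expressed as $K=U_{0,T}G_K$ for some $G_K$ satisfying these conditions (together with some $P\ge 0$).
   Context: $\mathbf{1}$ denotes the vector of all ones of appropriate dimension; inequalities between vectors/matrices are entrywise. A C-set is a convex compact subset of $\mathbb{R}^n$ containing the origin as an interior point. For $\mu\ge0$, $\mu\mathcal{S}:=\{\mu x:x\in\mathcal{S}\}$. A C-set $\mathcal{S}$ is $\lambda$-contractive for $x^+=Fx$ (with $\lambda\in[0,1)$) if for each $x\in\mathcal{S}$, $\inf\{\lambda'\ge0: Fx\in\lambda'\mathcal{S}\}\le\lambda$. $\mathcal{S}$ is admissible for $\mathcal{U}$ (with gain $K$) if $Kx\in\mathcal{U}$ for every $x\in\mathcal{S}$. *)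

(* Defs.v *)
From HB Require Import structures.
From mathcomp Require Import all_boot all_order all_algebra.
From mathcomp Require Import all_classical all_reals all_analysis.
Set Implicit Arguments. Unset Strict Implicit. Unset Printing Implicit Defensive.
Import Order.TTheory GRing.Theory Num.Theory.
Import numFieldNormedType.Exports.
Local Open Scope classical_set_scope.
Local Open Scope ring_scope.

Definition mxle (R : realType) (p q : nat) (M N : 'M[R]_(p, q)) : Prop :=
  forall i j, M i j <= N i j.

Definition polyset (R : realType) (p q : nat) (M : 'M[R]_(p, q)) : set 'cV[R]_q :=
  [set x | mxle (M *m x) (const_mx 1)].

Definition convex_set (R : realType) (n : nat) (S : set 'cV[R]_n) : Prop :=
  forall x y (t : R), S x -> S y -> 0 <= t <= 1 -> S (t *: x + (1 - t) *: y).

Definition Cset (R : realType) (n : nat) (S : set 'cV[R]_n) : Prop :=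
  convex_set S /\ compact S /\ (interior S) 0.

Definition scale_set (R : realType) (n : nat) (mu : R) (S : set 'cV[R]_n) : set 'cV[R]_n :=
  [set mu *: x | x in S].

Definition contractive (R : realType) (n : nat) (F : 'M[R]_n) (S : set 'cV[R]_n) (lam : R) : Prop :=
  forall x, S x -> inf [set l : R | 0 <= l /\ scale_set l S (F *m x)] <= lam.

Definition admissible (R : realType) (n m : nat) (K : 'M[R]_(m, n)) (S : set 'cV[R]_n)
  (U : set 'cV[R]_m) : Prop :=
  forall x, S x -> U (K *m x).

Definition vertex (R : realType) (n : nat) (S : set 'cV[R]_n) (s : 'cV[R]_n) : Prop :=
  S s /\ forall x y (t : R), S x -> S y -> 0 < t < 1 -> s = t *: x + (1 - t) *: y -> x = y.

Definition dataU (R : realType) (m T : nat) (ud : nat -> 'cV[R]_m) : 'M[R]_(m, T) :=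
  \matrix_(i < m, j < T) ud j i 0.
Definition dataX0 (R : realType) (n T : nat) (xd : nat -> 'cV[R]_n) : 'M[R]_(n, T) :=
  \matrix_(i < n, j < T) xd j i 0.
Definition dataX1 (R : realType) (n T : nat) (xd : nat -> 'cV[R]_n) : 'M[R]_(n, T) :=
  \matrix_(i < n, j < T) xd j.+1 i 0.

(* Main.v *)
Require Import Defs.
From HB Require Import structures.
From mathcomp Require Import all_boot all_order all_algebra.
From mathcomp Require Import all_classical all_reals all_analysis.
From mathcomp Require Import ring lra.
Set Implicit Arguments. Unset Strict Implicit. Unset Printing Implicit Defensive.
Import Order.TTheory GRing.Theory Num.Theory.
Import numFieldNormedType.Exports.
Local Open Scope classical_set_scope.
Local Open Scope ring_scope.
Lemma lin_cont (R : realType) n (g : 'rV[R]_n) :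
  continuous (fun x : 'cV[R]_n => (g *m x) 0 0).
Proof.
have -> : (fun x : 'cV[R]_n => (g *m x) 0 0) = (fun x => \sum_(k <- index_enum 'I_n) g 0 k * x k 0).
  by apply/funext => x; rewrite mxE.
elim: (index_enum _) => [|k r IH].
  under eq_fun do rewrite big_nil. exact: cst_continuous.
under eq_fun do rewrite big_cons.
move=> x.
apply: (@continuousD _ _ _ (fun x : 'cV[R]_n => g 0 k * x k 0) (fun x => \sum_(k <- r) g 0 k * x k 0)); last exact: IH.
apply: (@continuousM _ _ (fun _ => g 0 k) (fun x : 'cV[R]_n => x k 0)).
  exact: cst_continuous.
exact: coord_continuous.
Qed.

Definition face (R : realType) n (S C : set 'cV[R]_n) :=
  C `<=` S /\ forall p x y (t : R), C p -> S x -> S y -> 0 < t < 1 ->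
    p = t *: x + (1 - t) *: y -> C x /\ C y.

Definition affine_fun (R : realType) n (f : 'cV[R]_n -> R) :=
  forall x y (t : R), f (t *: x + (1 - t) *: y) = t * f x + (1 - t) * f y.

Lemma argmax_face (R : realType) n (S C : set 'cV[R]_n) (f : 'cV[R]_n -> R) :
  continuous f -> affine_fun f -> C !=set0 -> compact C -> face S C ->
  exists C', [/\ C' `<=` C, C' !=set0, compact C', face S C' &
                forall x y, C' x -> C y -> f y <= f x].
Proof.
move=> fc fa C0 cC [CS Cf].
have [c cC' cmax] := compact_EVT_max C0 cC (@continuous_subspaceT _ _ C f fc).
have Cc : C c by move: cC'; rewrite inE.
exists (C `&` [set x | f c <= f x]); split.
- by move=> x [].
- by exists c; split => //=.
- apply: compact_closedI => //.
  apply: (@preimage_closed _ _ f [set x | f c <= x]); last exact: closed_ge.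
  by move=> x _; exact: fc.
- split; first by move=> x [/CS].
  move=> p x y t [Cp /= fp] Sx Sy /andP[t0 t1] pE.
  have [Cx Cy] := Cf p x y t Cp Sx Sy (introT andP (conj t0 t1)) pE.
  have fx : f x <= f c by apply: cmax; rewrite inE.
  have fy : f y <= f c by apply: cmax; rewrite inE.
  have := fa x y t; rewrite -pE => fpE.
  split; split => //=.
  + rewrite fpE in fp; nra.
  + rewrite fpE in fp; nra.
- move=> x y [Cx /= fx] Cy.
  by apply: le_trans fx; apply: cmax; rewrite inE.
Qed.

Lemma exists_vertex_max (R : realType) n (S : set 'cV[R]_n) (f : 'cV[R]_n -> R) :
  continuous f -> affine_fun f -> S !=set0 -> compact S ->
  exists p, vertex S p /\ forall y, S y -> f y <= f p.
Proof.
move=> fc fa S0 cS.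
have fS : face S S by split => // p x y t _ Sx Sy.
have [C1 [C1S C10 cC1 fC1 C1max]] := argmax_face fc fa S0 cS fS.
have step : forall k, (k <= n)%N -> exists C, [/\ C `<=` C1, C !=set0, compact C, face S C &
   forall x y, C x -> C y -> forall i : 'I_n, (i < k)%N -> x i 0 = y i 0].
  elim => [|k IH] kn.
    by exists C1; split => // x y _ _ i.
  have [C [CC1 C0 cC fC Ceq]] := IH (ltnW kn).
  pose i0 : 'I_n := Ordinal kn.
  have gc : continuous (fun x : 'cV[R]_n => x i0 0) by exact: coord_continuous.
  have ga : affine_fun (fun x : 'cV[R]_n => x i0 0) by move=> x y t; rewrite !mxE.
  have [C' [C'C C'0 cC' fC' C'max]] := argmax_face gc ga C0 cC fC.
  exists C'; split => //.
    by move=> x /C'C /CC1.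
  move=> x y C'x C'y i; rewrite ltnS leq_eqVlt => /orP[/eqP ik|ik].
    have -> : i = i0 by apply: val_inj.
    apply/eqP; rewrite eq_le; apply/andP; split.
      by apply: C'max => //; exact: C'C.
    by apply: C'max => //; exact: C'C.
  by apply: Ceq => //; exact: C'C.
have [C [CC1 [p Cp] cC [CS fC] Ceq]] := step n (leqnn n).
exists p; split.
  split; first exact: CS.
  move=> x y t Sx Sy t01 pE.
  have [Cx Cy] := fC p x y t Cp Sx Sy t01 pE.
  apply/matrixP => i j; rewrite (ord1 j).
  exact: Ceq.
by move=> y Sy; apply: C1max => //; exact: CC1.
Qed.
Section Farkas.
Variable R : realType.

Definition dot k (u v : 'rV[R]_k) : R := \sum_i u 0 i * v 0 i.

Lemma dotBl k (u w v : 'rV[R]_k) : dot (u - w) v = dot u v - dot w v.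
Proof. rewrite /dot -sumrB; apply: eq_bigr => i _; rewrite !mxE; ring. Qed.
Lemma dotBr k (u w v : 'rV[R]_k) : dot v (u - w) = dot v u - dot v w.
Proof. rewrite /dot -sumrB; apply: eq_bigr => i _; rewrite !mxE; ring. Qed.
Lemma dotZl k (u v : 'rV[R]_k) c : dot (c *: u) v = c * dot u v.
Proof. rewrite /dot mulr_sumr; apply: eq_bigr => i _; rewrite !mxE; ring. Qed.
Lemma dotZr k (u v : 'rV[R]_k) c : dot v (c *: u) = c * dot v u.
Proof. rewrite /dot mulr_sumr; apply: eq_bigr => i _; rewrite !mxE; ring. Qed.

Lemma dot_pos k (b : 'rV[R]_k) : b != 0 -> 0 < dot b b.
Proof.
move=> b0; have sq (r : R) : 0 <= r * r by rewrite -expr2 sqr_ge0.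
have ge0 : 0 <= dot b b by apply: sumr_ge0 => i _; exact: sq.
rewrite lt_def ge0 andbT; apply: contra b0 => /eqP e.
have := psumr_eq0P (fun i _ => sq (b 0 i)) e => H.
apply/eqP/rowP => i; rewrite mxE; have /eqP := H i isT.
by rewrite mulf_eq0 orbb => /eqP.
Qed.

Fixpoint incone k (s : seq 'rV[R]_k) (b : 'rV[R]_k) : Prop :=
  match s with
  | [::] => b = 0
  | a :: s' => exists2 y, 0 <= y & incone s' (b - y *: a)
  end.

Lemma incone_map k (a : 'rV[R]_k) (phi : 'rV[R]_k -> R) (s : seq 'rV[R]_k) v :
  (forall w, w \in s -> phi w <= 0) ->
  incone [seq w - phi w *: a | w <- s] v -> exists2 t, t <= 0 & incone s (v + t *: a).
Proof.
elim: s v => [|w s IH] v /= hphi.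
  by move=> ->; exists 0 => //; rewrite scale0r addr0.
move=> [y y0 H].
have [t' t'0 H'] := IH _ (fun w' ww' => hphi w' (mem_behead (s:=w::s) ww')) H.
have pw : phi w <= 0 by apply: hphi; rewrite mem_head.
exists (y * phi w + t'); first by nra.
exists y => //.
suff -> : v + (y * phi w + t') *: a - y *: w = v - y *: (w - phi w *: a) + t' *: a by [].
by apply/rowP => i; rewrite !mxE; ring.
Qed.

Lemma farkas_cone_aux k l : forall (s : seq 'rV[R]_k) b, size s = l ->
  incone s b \/ exists x, (forall a, a \in s -> dot a x <= 0) /\ 0 < dot b x.
Proof.
elim: l => [|l IH] [|a s] b //= sz; try discriminate sz.
  have [->|b0] := eqVneq b 0; first by left.
  by right; exists b; split => //; exact: dot_pos.
case: sz => sz.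
have [Hb|[x [xs bx]]] := IH s b sz.
  by left; exists 0 => //; rewrite scale0r subr0.
have [ax|ax] := leP (dot a x) 0.
  right; exists x; split => // a'; rewrite in_cons => /orP[/eqP->//|]; exact: xs.
pose phi v := dot v x / dot a x.
have szm : size [seq w - phi w *: a | w <- s] = l by rewrite size_map.
have [H|[x' [xs' bx']]] := IH [seq w - phi w *: a | w <- s] (b - phi b *: a) szm.
  have hphi : forall w, w \in s -> phi w <= 0.
    move=> w ws; rewrite /phi; apply: mulr_le0_ge0; first exact: xs.
    by rewrite invr_ge0 ltW.
  have [t t0 Ht] := incone_map hphi H.
  left; exists (phi b - t).
    suff : 0 < phi b by lra.
    by apply: divr_gt0.
  suff -> : b - (phi b - t) *: a = b - phi b *: a + t *: a by [].
  by apply/rowP => i; rewrite !mxE; ring.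
have ax0 : dot a x != 0 by rewrite gt_eqF.
right; exists (x' - (dot a x' / dot a x) *: x); split.
  move=> a'; rewrite in_cons => /orP[/eqP->|a's].
    by rewrite dotBr dotZr divfK // subrr.
  have := xs' (a' - phi a' *: a) (map_f _ a's).
  rewrite dotBr dotZr dotBl dotZl /phi.
  suff -> : dot a' x' - dot a x' / dot a x * dot a' x = dot a' x' - dot a' x / dot a x * dot a x' by [].
  by ring.
move: bx'; rewrite dotBr dotZr dotBl dotZl /phi.
suff -> : dot b x' - dot a x' / dot a x * dot b x = dot b x' - dot b x / dot a x * dot a x' by [].
by ring.
Qed.

Lemma farkas_cone k (s : seq 'rV[R]_k) b :
  incone s b \/ exists x, (forall a, a \in s -> dot a x <= 0) /\ 0 < dot b x.
Proof. exact: (@farkas_cone_aux k (size s)). Qed.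

Lemma incone_idx k (I : eqType) (r : seq I) (f : I -> 'rV[R]_k) b :
  uniq r -> incone (map f r) b ->
  exists y : I -> R, (forall i, 0 <= y i) /\ b = \sum_(i <- r) y i *: f i.
Proof.
elim: r b => [|i r IH] b /=.
  by move=> _ ->; exists (fun _ => 0); split => //; rewrite big_nil.
move=> /andP[ir ur] [y0 y00 H].
have [y [yp E]] := IH _ ur H.
exists (fun j => if j == i then y0 else y j); split.
  by move=> j; case: (j == i).
rewrite big_cons eqxx.
have -> : \sum_(j <- r) (if j == i then y0 else y j) *: f j = \sum_(j <- r) y j *: f j.
  apply: eq_big_seq => j jr; case: eqP => // ji.
  by move: ir; rewrite -ji jr.
by rewrite -E addrC subrK.
Qed.

Lemma mulcolE p n (M : 'M[R]_(p, n)) (v : 'rV[R]_n) mu j :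
  (M *m (mu *: v^T)) j 0 = mu * \sum_k M j k * v 0 k.
Proof.
rewrite mxE mulr_sumr; apply: eq_bigr => k _; rewrite !mxE; ring.
Qed.

Lemma dot_row_mx n (u : 'rV[R]_n) (y : 'rV[R]_(n + 1)) (q : R) :
  dot (row_mx u (const_mx q : 'rV[R]_1)) y = dot u (lsubmx y) + q * y 0 (rshift n 0).
Proof.
rewrite /dot big_split_ord /= big_ord1; congr (_ + _).
  by apply: eq_bigr => i _; rewrite row_mxEl !mxE.
by rewrite row_mxEr mxE.
Qed.

Lemma farkas_aff n ns (Sm : 'M[R]_(ns, n)) (c : 'rV[R]_n) (d : R) :
  (forall x : 'cV[R]_n, (forall j, (Sm *m x) j 0 <= 1) -> (c *m x) 0 0 <= d) ->
  exists p : 'rV[R]_ns, [/\ forall j, 0 <= p 0 j, p *m Sm = c & \sum_j p 0 j <= d].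
Proof.
move=> hyp.
pose gen (j : 'I_ns) : 'rV[R]_(n + 1) := row_mx (row j Sm) (const_mx 1).
pose e : 'rV[R]_(n + 1) := row_mx 0 (const_mx 1).
pose b : 'rV[R]_(n + 1) := row_mx c (const_mx d).
case: (farkas_cone (e :: map gen (index_enum 'I_ns)) b).
  move=> [z z0 H].
  have [y [y0 E]] := incone_idx (index_enum_uniq _) H.
  exists (\row_j y j); split.
  - by move=> j; rewrite mxE.
  - rewrite mulmx_sum_row; have := congr1 lsubmx E.
    rewrite linearB linearZ /= !row_mxKl scaler0 subr0 linear_sum /= => ->.
    by apply: eq_bigr => j _; rewrite linearZ /= row_mxKl mxE.
  - have := congr1 (fun v => rsubmx v 0 0) E => /=.
    rewrite linearB linearZ /= !row_mxKr linear_sum /= summxE !mxE => E2.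
    have -> : \sum_j (\row_j0 y j0) 0 j = d - z * 1.
      by rewrite E2; apply: eq_bigr => j _; rewrite linearZ /= row_mxKr !mxE mulr1.
    lra.
move=> [x [xs bx]].
pose xv := lsubmx x; pose t := x 0 (rshift n 0).
have t0 : t <= 0.
  have := xs e (mem_head _ _); rewrite dot_row_mx.
  suff -> : dot 0 xv = 0 by rewrite add0r mul1r.
  by rewrite /dot big1 // => i _; rewrite mxE mul0r.
have gj : forall j, \sum_k Sm j k * xv 0 k + t <= 0.
  move=> j; have := xs (gen j).
  rewrite in_cons map_f ?mem_index_enum ?orbT // => /(_ isT).
  rewrite /gen dot_row_mx mul1r /dot.
  suff -> : \sum_i row j Sm 0 i * lsubmx x 0 i = \sum_k Sm j k * xv 0 k by [].
  by apply: eq_bigr => i _; rewrite mxE.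
have cb : 0 < \sum_k c 0 k * xv 0 k + d * t.
  by move: bx; rewrite dot_row_mx.
have [tlt|teq] := ltP t 0.
  pose s := (- t)^-1.
  have s0 : 0 < s by rewrite invr_gt0 oppr_gt0.
  have st : s * (- t) = 1 by rewrite mulVf // oppr_eq0 lt_eqF.
  have : (c *m (s *: xv^T)) 0 0 <= d.
    apply: hyp => j; rewrite mulcolE; have := gj j; nra.
  rewrite mulcolE => h2.
  set C := \sum_k c 0 k * xv 0 k in cb h2.
  have h3 : 0 < s * (C + d * t) := mulr_gt0 s0 cb.
  have eC : s * (C + d * t) = s * C - d.
    transitivity (s * C + d * (- (s * (- t)))); first ring.
    by rewrite st; ring.
  lra.
have t00 : t = 0 by apply/eqP; rewrite eq_le t0 teq.
rewrite t00 mulr0 addr0 in cb.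
pose mu := (`|d| + 1) / \sum_k c 0 k * xv 0 k.
have mu0 : 0 < mu by apply: divr_gt0 => //; rewrite ltr_wpDl.
have : (c *m (mu *: xv^T)) 0 0 <= d.
  apply: hyp => j; rewrite mulcolE; have := gj j; rewrite t00 addr0; nra.
rewrite mulcolE /mu divfK ?gt_eqF //.
have := ler_norm d; lra.
Qed.

End Farkas.

Section Main.
Variable R : realType.

Lemma polysetP p n (M : 'M[R]_(p, n)) x :
  polyset M x <-> forall j, (M *m x) j 0 <= 1.
Proof.
rewrite /polyset /mxle /=; split.
  by move=> h j; move: (h j 0); rewrite !mxE.
by move=> h j k; rewrite (ord1 k) [const_mx _ _ _]mxE; exact: h.
Qed.

Lemma affine_row n (g : 'rV[R]_n) : affine_fun (fun x : 'cV[R]_n => (g *m x) 0 0).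
Proof. by move=> x y t; rewrite mulmxDr -!scalemxAr !mxE. Qed.

Lemma sum_le_abs p (a : 'I_p -> R) j : a j < 1 + \sum_i `|a i|.
Proof.
rewrite (bigD1 j) //=.
have := ler_norm (a j); have : 0 <= \sum_(i | i != j) `|a i| by apply: sumr_ge0.
lra.
Qed.

Lemma rightinv m n T (U0 : 'M[R]_(m, T)) (X0 : 'M[R]_(n, T)) (K : 'M[R]_(m, n)) :
  \rank (col_mx U0 X0) = (m + n)%N ->
  exists G : 'M[R]_(T, n), U0 *m G = K /\ X0 *m G = 1%:M.
Proof.
move=> rk.
have : row_full (col_mx U0 X0)^T by rewrite /row_full mxrank_tr rk.
move=> /row_fullP [B' HB].
have HB' : col_mx U0 X0 *m B'^T = 1%:M.
  by rewrite -[col_mx U0 X0]trmxK -trmx_mul HB trmx1.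
exists (B'^T *m col_mx K 1%:M).
have := mulmxA (col_mx U0 X0) B'^T (col_mx K 1%:M).
rewrite HB' mul1mx mul_col_mx => /eq_col_mx [h1 h2].
by split.
Qed.

End Main.

Theorem theorem2 (R : realType) (n m ns nu T : nat)
  (A : 'M[R]_n) (B : 'M[R]_(n, m)) (Sm : 'M[R]_(ns, n)) (Um : 'M[R]_(nu, m))
  (lam : R) (ud : nat -> 'cV[R]_m) (xd : nat -> 'cV[R]_n) :
  Cset (polyset Sm) ->
  0 <= lam < 1 ->
  (forall k, (k < T)%N -> xd k.+1 = A *m xd k + B *m ud k) ->
  \rank (col_mx (dataU T ud) (dataX0 T xd)) = (m + n)%N ->
  let U0 := dataU T ud in
  let X0 := dataX0 T xd in
  let X1 := dataX1 T xd in
  let conds (GK : 'M[R]_(T, n)) (P : 'M[R]_ns) :=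
    [/\ mxle (0 : 'M[R]_ns) P,
        mxle (P *m (const_mx 1 : 'cV[R]_ns)) (lam *: (const_mx 1 : 'cV[R]_ns)),
        P *m Sm = Sm *m X1 *m GK,
        (forall s, vertex (polyset Sm) s -> mxle (Um *m U0 *m GK *m s) (const_mx 1))
      & 1%:M = X0 *m GK] in
  ((exists K : 'M[R]_(m, n),
      contractive (A + B *m K) (polyset Sm) lam /\ admissible K (polyset Sm) (polyset Um))
   <-> (exists GK P, conds GK P))
  /\ (forall K : 'M[R]_(m, n),
        contractive (A + B *m K) (polyset Sm) lam -> admissible K (polyset Sm) (polyset Um) ->
        exists GK P, conds GK P /\ K = U0 *m GK).
Proof.
move=> [_ [cS _]] /andP[lam0 lam1] hdyn hrank U0 X0 X1 conds.
have X1E : X1 = A *m X0 + B *m U0.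
  apply/matrixP => i j; rewrite /X1 /X0 /U0 /dataX1 /dataX0 /dataU !mxE.
  rewrite (hdyn j (ltn_ord j)) !mxE; congr (_ + _); apply: eq_bigr => k _; rewrite !mxE //.
have S0 : polyset Sm 0 by apply/polysetP => j; rewrite mulmx0 mxE ler01.
have key : forall K : 'M[R]_(m, n),
    contractive (A + B *m K) (polyset Sm) lam -> admissible K (polyset Sm) (polyset Um) ->
    exists GK P, conds GK P /\ K = U0 *m GK.
  move=> K hc ha.
  have [G [UG XG]] := rightinv K hrank.
  have FE : A + B *m K = X1 *m G by rewrite X1E mulmxDl -!mulmxA XG UG mulmx1.
  have hrow : forall i : 'I_ns, exists p : 'rV[R]_ns,
      [/\ forall j, 0 <= p 0 j, p *m Sm = row i (Sm *m (A + B *m K)) & \sum_j p 0 j <= lam].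
    move=> i; apply: farkas_aff => x /polysetP Sx.
    rewrite -row_mul mxE -mulmxA.
    set v := (A + B *m K) *m x.
    have := hc x Sx; set E := [set l | _] => infE.
    apply: le_trans infE.
    apply: lb_le_inf.
      pose M := 1 + \sum_j `|(Sm *m v) j 0|.
      have M0 : 0 < M.
        have : 0 <= \sum_j `|(Sm *m v) j 0| by apply: sumr_ge0.
        rewrite /M; lra.
      exists M; split; first exact: ltW.
      exists (M^-1 *: v).
        apply/polysetP => j; rewrite -scalemxAr mxE.
        rewrite ler_pdivrMl // mulr1; apply: ltW; exact: (sum_le_abs (fun j => (Sm *m v) j 0)).
      by rewrite scalerA mulfV ?gt_eqF // scale1r.
    move=> l [l0 [z Sz zE]].
    rewrite /v -zE -scalemxAr mxE.
    move/polysetP: Sz => /(_ i); nra.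
  have [pf hpf] := choice hrow.
  exists G, (\matrix_(i, j) pf i 0 j); split; last by [].
  split.
  - by move=> i j; rewrite !mxE; have [] := hpf i.
  - move=> i j; rewrite !mxE; have [_ _ hs] := hpf i.
    rewrite mulr1; apply: (le_trans _ hs); rewrite le_eqVlt; apply/orP; left; apply/eqP; apply: eq_bigr => k _; by rewrite !mxE mulr1.
  - apply/row_matrixP => i; rewrite row_mul.
    have [_ h _] := hpf i.
    rewrite -mulmxA -FE -h; congr (_ *m _).
    by apply/rowP => j; rewrite !mxE.
  - move=> s [Ss _].
    have := ha s Ss.
    by rewrite -(mulmxA Um) UG -mulmxA.
  - by rewrite XG.
split => //; split.
  move=> [K [hc ha]]; have [GK [P [c _]]] := key K hc ha.
  by exists GK, P.
move=> [GK [P [P0 P1 PS Vs XG]]].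
exists (U0 *m GK); split.
  have FE : A + B *m (U0 *m GK) = X1 *m GK by rewrite X1E mulmxDl -!mulmxA -XG mulmx1.
  move=> x Sx; set E := [set l | _].
  set v := (A + B *m (U0 *m GK)) *m x.
  have SF : forall j, (Sm *m v) j 0 <= lam.
    move=> j; rewrite /v FE mulmxA mulmxA -PS -mulmxA.
    apply: (@le_trans _ _ ((P *m (const_mx 1 : 'cV[R]_ns)) j 0)).
      rewrite mxE [X in _ <= X]mxE; apply: ler_sum => k _.
      apply: ler_wpM2l; first by have := P0 j k; rewrite !mxE.
      by move/polysetP: Sx => /(_ k); rewrite [const_mx _ _ _]mxE.
    have := P1 j 0; rewrite !mxE mulr1 => h; apply: (le_trans _ h); apply: ler_sum => k _; by rewrite !mxE.
  have hlb : has_lbound E by exists 0 => l [].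
  apply/ler_addgt0Pr => e e0.
  have hinf := ge_inf hlb; apply: hinf; split; first lra.
  exists ((lam + e)^-1 *: v).
    apply/polysetP => j; rewrite -scalemxAr mxE mulrC ler_pdivrMr; last lra.
    by rewrite mul1r; have := SF j; lra.
  by rewrite scalerA mulfV ?scale1r // gt_eqF //; lra.
move=> x Sx; apply/polysetP => i.
pose g := row i (Um *m U0 *m GK).
have fE : forall w : 'cV[R]_n, (g *m w) 0 0 = (Um *m U0 *m GK *m w) i 0.
  by move=> w; rewrite /g -row_mul mxE.
have [p [vp pmax]] := exists_vertex_max (@lin_cont R n g) (@affine_row R n g) (ex_intro _ 0 S0) cS.
have hp := Vs p vp.
rewrite !mulmxA -fE; apply: le_trans (pmax x Sx) _.
rewrite fE; have := hp i 0; rewrite [const_mx _ _ _]mxE; exact.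
Qed.
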